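(* Let $G$ be a finite simple connected graph and $w$ a non-negative real function on the edges of $G$. Let $d_s$ be the shortest-path distance on the vertices of $G$, and define $\pi(u,u)=0$ and, for distinct vertices $u,v$, \[\pi(u,v) = \min\left\{ \frac{p(\gamma)}{p(\gamma)+1} : \gamma \text{ is a shortest path between } u \text{ and } v\right\},\] where $p(\gamma) = \prod_{e \in \gamma} w(e)$ is the product of the weights of the edges of $\gamma$. Then $d^{\pi}_w := d_s + \pi$ is a metric on the vertex set of $G$. *)

(* Defs.v *)
From HB Require Import structures.
From mathcomp Require Import all_boot all_order all_algebra.
Set Implicit Arguments. Unset Strict Implicit. Unset Printing Implicit Defensive.
Import Order.TTheory GRing.Theory Num.Theory.
Local Open Scope ring_scope.

Section Graph.
Variables (T : finType) (e : rel T).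

Definition simple_graph := irreflexive e /\ symmetric e.
Definition connected_graph := forall u v : T, connect e u v.

(* a walk from u to v with vertex sequence u :: t (size t = number of edges) *)
Definition is_walk (u : T) (t : seq T) (v : T) : bool :=
  path e u t && (last u t == v).

(* shortest-path distance: least number of edges of a walk from u to v
   (in a connected graph it is < #|T|; the search range is iota 0 #|T|.+1) *)
Definition dist_s (u v : T) : nat :=
  find (fun n => [exists t : n.-tuple T, is_walk u t v]) (iota 0 #|T|.+1).

Definition shortest_path (u v : T) (t : seq T) : bool :=
  is_walk u t v && (size t == dist_s u v).

Variable R : realFieldType.
(* edge weights: a function on (unordered) edges {u,v} *)
Variable w : {set T} -> R.

Definition path_weight (u : T) (t : seq T) : R :=
  \prod_(x <- pairmap (fun a b => w [set a; b]) u t) x.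

(* pi(u,u) = 0; otherwise the minimum of p/(p+1) over all shortest paths.
   All the values lie in [0,1), so the neutral element 1 of the min
   is irrelevant as soon as a shortest path exists. *)
Definition pi_w (u v : T) : R :=
  if u == v then 0 else
  \big[Num.min/1]_(t : (dist_s u v).-tuple T | shortest_path u v t)
     (path_weight u t / (path_weight u t + 1)).

Definition d_pi (u v : T) : R := (dist_s u v)%:R + pi_w u v.

End Graph.

Definition is_metric (T : Type) (R : realFieldType) (d : T -> T -> R) : Prop :=
  [/\ forall x y, 0 <= d x y,
      forall x y, d x y = 0 <-> x = y,
      forall x y, d x y = d y x &
      forall x y z, d x z <= d x y + d y z].

(* Main.v *)
Require Import Defs.
From HB Require Import structures.
From mathcomp Require Import all_boot all_order all_algebra.
From mathcomp Require Import ring lra.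
Set Implicit Arguments. Unset Strict Implicit.
Import Order.TTheory GRing.Theory Num.Theory.
Local Open Scope ring_scope.

Lemma bigmin_ub (I : finType) (R : realFieldType) (P : pred I) (F : I -> R) i0 :
  P i0 -> \big[Num.min/1]_(i | P i) F i <= F i0.
Proof. by move=> Pi; rewrite (bigD1 i0) //= ge_min lexx. Qed.

Lemma bigmin_le1 (I : finType) (R : realFieldType) (P : pred I) (F : I -> R) :
  \big[Num.min/1]_(i | P i) F i <= 1.
Proof.
apply: (big_rec (fun m => m <= 1)) => // i m _ hm.
by rewrite ge_min hm orbT.
Qed.

Lemma bigmin_lb (I : finType) (R : realFieldType) (P : pred I) (F : I -> R) x :
  x <= 1 -> (forall i, P i -> x <= F i) -> x <= \big[Num.min/1]_(i | P i) F i.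
Proof.
move=> h1 hF; apply: (big_ind (fun m => x <= m)) => //.
by move=> a b ha hb; rewrite le_min ha hb.
Qed.

Lemma bigmin_cases (I : finType) (R : realFieldType) (P : pred I) (F : I -> R) :
  \big[Num.min/1]_(i | P i) F i = 1 \/
  exists i, P i /\ \big[Num.min/1]_(i | P i) F i = F i.
Proof.
pose Q m := m = 1 \/ exists i, P i /\ m = F i.
apply: (big_ind Q); first by left.
- by move=> a b ha hb; case: leP => _.
- by move=> i Pi; right; exists i.
Qed.

Section Aux.
End Aux.

Lemma walk_cat (T : finType) (e : rel T) x y z t1 t2 :
  is_walk e x t1 y -> is_walk e y t2 z -> is_walk e x (t1 ++ t2) z.
Proof.
rewrite /is_walk => /andP[p1 /eqP l1] /andP[p2 /eqP l2].
by rewrite cat_path last_cat l1 p1 p2 /= l2 eqxx.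
Qed.

Lemma last_rev_belast (T : Type) (u : T) t :
  last (last u t) (rev (belast u t)) = u.
Proof. by case: t => //= y t; rewrite rev_cons last_rcons. Qed.

Lemma walk_rev (T : finType) (e : rel T) a b t :
  symmetric e -> is_walk e a t b -> is_walk e b (rev (belast a t)) a.
Proof.
move=> sym /andP[p /eqP <-]; rewrite /is_walk rev_path last_rev_belast eqxx andbT.
by rewrite (@eq_path _ _ e) // => x y /=; rewrite sym.
Qed.

Lemma dist_le (T : finType) (e : rel T) u v t :
  is_walk e u t v -> (dist_s e u v <= size t)%N.
Proof.
move=> wk; rewrite /dist_s.
case: (ltnP (size t) #|T|.+1) => h; last first.
  by apply: leq_trans (find_size _ _) _; rewrite size_iota.
rewrite leqNgt; apply/negP => hlt; have := before_find 0%N hlt.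
rewrite nth_iota // add0n => /negbT/negP; apply.
by apply/existsP; exists (in_tuple t).
Qed.

Lemma dist_ex (T : finType) (e : rel T) u v :
  connected_graph e -> exists t, is_walk e u t v /\ size t = dist_s e u v.
Proof.
move=> conn; have /connectP [p pp lp] := conn u v.
move: lp; case: (shortenP pp) => p' pp' up' _ lp.
have sz : (size p' < #|T|.+1)%N.
  have := max_card (mem (u :: p')); rewrite (card_uniqP up') /=.
  by move=> h; apply: leq_trans h _.
pose a := (fun n => [exists t : n.-tuple T, is_walk e u t v]).
have ha : has a (iota 0 #|T|.+1).
  apply/hasP; exists (size p'); first by rewrite mem_iota /= add0n.
  by apply/existsP; exists (in_tuple p'); rewrite /is_walk pp' -lp eqxx.
have := nth_find 0%N ha; rewrite has_find in ha.
rewrite nth_iota; last by rewrite size_iota in ha.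
rewrite add0n => /existsP [t wt]; exists t; split => //.
by rewrite size_tuple.
Qed.

Lemma dist_sym (T : finType) (e : rel T) u v :
  symmetric e -> connected_graph e -> dist_s e u v = dist_s e v u.
Proof.
move=> sym conn.
suff H : forall a b, (dist_s e a b <= dist_s e b a)%N.
  by apply/eqP; rewrite eqn_leq !H.
move=> a b; have [t [wt st]] := dist_ex b a conn.
by rewrite -st -(size_belast b t) -size_rev; apply: dist_le; apply: walk_rev.
Qed.

Lemma dist_0 (T : finType) (e : rel T) u : dist_s e u u = 0%N.
Proof. by apply/eqP; rewrite -leqn0 (@dist_le _ _ _ _ [::]) //= /is_walk /= eqxx. Qed.

Lemma dist_0_eq (T : finType) (e : rel T) u v :
  connected_graph e -> dist_s e u v = 0%N -> u = v.
Proof.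
move=> conn h; have [t [wt st]] := dist_ex u v conn.
by move: st wt; rewrite h; case: t => //= _; rewrite /is_walk /= => /eqP.
Qed.

Lemma weight_ge0 (T : finType) (e : rel T) (R : realFieldType) (w : {set T} -> R) u t :
  (forall x y, e x y -> 0 <= w [set x; y]) -> path e u t -> 0 <= path_weight w u t.
Proof.
move=> Hw; elim: t u => [|y t IH] u /=; rewrite /path_weight /= ?big_nil ?big_cons //.
by move=> /andP[euy pt]; rewrite mulr_ge0 ?Hw //; apply: IH.
Qed.

Lemma weight_cat (T : finType) (R : realFieldType) (w : {set T} -> R) x t1 t2 :
  path_weight w x (t1 ++ t2) = path_weight w x t1 * path_weight w (last x t1) t2.
Proof. by rewrite /path_weight pairmap_cat big_cat. Qed.

Lemma weight_rev (T : finType) (R : realFieldType) (w : {set T} -> R) u t :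
  path_weight w (last u t) (rev (belast u t)) = path_weight w u t.
Proof.
elim: t u => [|y t IH] u //=.
rewrite rev_cons -cats1 /path_weight pairmap_cat big_cat /=.
rewrite big_cons big_nil mulr1 last_rev_belast big_cons.
have := IH y; rewrite /path_weight => ->.
by rewrite setUC mulrC.
Qed.

Lemma f_ge0 (R : realFieldType) (p : R) : 0 <= p -> 0 <= p / (p + 1).
Proof. by move=> h; rewrite divr_ge0 // addr_ge0. Qed.

Lemma f_lt1 (R : realFieldType) (p : R) : 0 <= p -> p / (p + 1) < 1.
Proof. move=> h; rewrite ltr_pdivrMr; lra. Qed.

Lemma f_sub (R : realFieldType) (a b : R) : 0 <= a -> 0 <= b ->
  (a * b) / (a * b + 1) <= a / (a + 1) + b / (b + 1).
Proof.
move=> ha hb.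
have h1 : a + 1 != 0 by rewrite lt0r_neq0 //; lra.
have h2 : b + 1 != 0 by rewrite lt0r_neq0 //; lra.
have h3 : a * b + 1 != 0 by rewrite lt0r_neq0 // ltr_wpDl // mulr_ge0.
rewrite -subr_ge0.
have -> : a / (a + 1) + b / (b + 1) - a * b / (a * b + 1) =
  (a ^+ 2 * b ^+ 2 + a * b + a + b) / ((a + 1) * (b + 1) * (a * b + 1)).
  by field; rewrite h1 h2 h3.
apply: divr_ge0.
  by rewrite !addr_ge0 ?mulr_ge0 ?exprn_ge0.
by rewrite !mulr_ge0 ?addr_ge0 ?mulr_ge0.
Qed.

Lemma pi_ge0 (T : finType) (e : rel T) (R : realFieldType) (w : {set T} -> R) u v :
  (forall x y, e x y -> 0 <= w [set x; y]) -> 0 <= pi_w e w u v.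
Proof.
move=> Hw; rewrite /pi_w; case: eqP => // _.
apply: bigmin_lb => // t /andP[/andP[pt _] _].
by apply: f_ge0; apply: weight_ge0 pt.
Qed.

Lemma pi_le1 (T : finType) (e : rel T) (R : realFieldType) (w : {set T} -> R) u v :
  pi_w e w u v <= 1.
Proof. by rewrite /pi_w; case: eqP => // _; apply: bigmin_le1. Qed.

Lemma pi_le_walk (T : finType) (e : rel T) (R : realFieldType) (w : {set T} -> R) u v t :
  u != v -> is_walk e u t v -> size t = dist_s e u v ->
  pi_w e w u v <= path_weight w u t / (path_weight w u t + 1).
Proof.
move=> neq wt st; rewrite /pi_w (negbTE neq).
have st' : size t == dist_s e u v by rewrite st.
have := @bigmin_ub _ R (fun t0 : (dist_s e u v).-tuple T => shortest_path e u v t0)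
  (fun t0 => path_weight w u t0 / (path_weight w u t0 + 1)) (Tuple st').
by apply; rewrite /shortest_path /= wt st'.
Qed.

Lemma pi_cases (T : finType) (e : rel T) (R : realFieldType) (w : {set T} -> R) u v :
  u != v -> pi_w e w u v = 1 \/ exists t, [/\ is_walk e u t v, size t = dist_s e u v &
     pi_w e w u v = path_weight w u t / (path_weight w u t + 1)].
Proof.
move=> neq; rewrite /pi_w (negbTE neq).
case: (bigmin_cases (fun t0 : (dist_s e u v).-tuple T => shortest_path e u v t0)
  (fun t0 => path_weight w u t0 / (path_weight w u t0 + 1))) => [->|[t [/andP[wt /eqP st] ->]]]; first by left.
by right; exists t.
Qed.

Lemma pi_lt1 (T : finType) (e : rel T) (R : realFieldType) (w : {set T} -> R) u v :
  (forall x y, e x y -> 0 <= w [set x; y]) -> connected_graph e -> u != v ->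
  pi_w e w u v < 1.
Proof.
move=> Hw conn neq; have [t [wt st]] := dist_ex u v conn.
apply: le_lt_trans (pi_le_walk w neq wt st) _.
apply: f_lt1; apply: (weight_ge0 Hw); by case/andP: wt.
Qed.

Lemma pi_le_sym (T : finType) (e : rel T) (R : realFieldType) (w : {set T} -> R) u v :
  symmetric e -> connected_graph e -> pi_w e w u v <= pi_w e w v u.
Proof.
move=> sym conn; have [->|neq] := eqVneq u v; first by [].
have neq' : v != u by rewrite eq_sym.
case: (pi_cases e w neq') => [->|[t [wt st ->]]]; first exact: pi_le1.
have wr := walk_rev sym wt.
have lt : last v t = u by case/andP: wt => _ /eqP.
rewrite -(weight_rev w v t) lt.
apply: pi_le_walk => //.
by rewrite size_rev size_belast st dist_sym.
Qed.

Theorem theorem3 (T : finType) (e : rel T) (R : realFieldType)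
    (w : {set T} -> R)
    (Hsimple : simple_graph e) (Hconn : connected_graph e)
    (Hw : forall x y : T, e x y -> 0 <= w [set x; y]) :
  is_metric (d_pi e w).
Proof.
have sym : symmetric e by case: Hsimple.
have d0 : forall x, d_pi e w x x = 0 by move=> x; rewrite /d_pi /pi_w eqxx dist_0 addr0.
have dge0 : forall x y, 0 <= d_pi e w x y.
  by move=> x y; rewrite /d_pi addr_ge0 ?ler0n ?pi_ge0.
split => //.
- move=> x y; split; last by move=> ->.
  rewrite /d_pi => h.
  have hp := pi_ge0 x y Hw.
  have hn := ler0n R (dist_s e x y).
  have : (dist_s e x y)%:R = 0 :> R by lra.
  by move/eqP; rewrite pnatr_eq0 => /eqP; apply: dist_0_eq.
- move=> x y; rewrite /d_pi dist_sym //; congr (_ + _).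
  by apply/le_anti; rewrite !pi_le_sym.
move=> x y z.
have [<-|nxz] := eqVneq x z; first by rewrite d0 addr_ge0.
have [<-|nxy] := eqVneq x y; first by rewrite d0 add0r.
have [<-|nyz] := eqVneq y z; first by rewrite d0 addr0.
have [t1 [w1 s1]] := dist_ex x y Hconn.
have [t2 [w2 s2]] := dist_ex y z Hconn.
have w12 := walk_cat w1 w2.
have tri := dist_le w12; rewrite size_cat s1 s2 in tri.
have pxy := pi_ge0 x y Hw; have pyz := pi_ge0 y z Hw.
have pxz1 := pi_le1 e w x z.
rewrite /d_pi.
have [lt|ge] := ltnP (dist_s e x z) (dist_s e x y + dist_s e y z).
  have h : (dist_s e x z)%:R + 1 <= (dist_s e x y)%:R + (dist_s e y z)%:R :> R.
    by rewrite natr1 -natrD ler_nat.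
  have := pi_lt1 Hw Hconn nxz; lra.
have eq : dist_s e x z = (dist_s e x y + dist_s e y z)%N.
  by apply/eqP; rewrite eqn_leq tri ge.
rewrite eq natrD.
suff : pi_w e w x z <= pi_w e w x y + pi_w e w y z by lra.
case: (pi_cases e w nxy) => [->|[u1 [wu1 su1 E1]]]; first lra.
case: (pi_cases e w nyz) => [->|[u2 [wu2 su2 E2]]]; first by lra.
rewrite E1 E2.
have wu := walk_cat wu1 wu2.
have lu1 : last x u1 = y by case/andP: wu1 => _ /eqP.
have su : size (u1 ++ u2) = dist_s e x z by rewrite size_cat su1 su2 eq.
apply: le_trans (pi_le_walk w nxz wu su) _.
rewrite weight_cat lu1.
apply: f_sub; apply: (weight_ge0 Hw).
  by case/andP: wu1.
by case/andP: wu2.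
Qed.
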